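(* Let $\mathcal S\subseteq\mathbb{R}^3$ be the subset generated by a pair of distinct lines in the plane. (1) If $\mathcal S$ is an HR-cone but not a unit cone, then $\mathcal S$ has a unique pair of generating lines; writing $\mathcal S=(A,{\bf a})$, these lines are the zero set (degenerate hyperbola) $\{{\bf x}\in\mathbb{R}^2: ({\bf x}-{\bf a})^T(A-I)({\bf x}-{\bf a})=0\}$. (2) $\mathcal S$ is a unit cone if and only if the generating lines for $\mathcal S$ are orthogonal, which holds if and only if the cone matrix of $\mathcal S$ is $I$. In this case, the lines in every pair of generating lines for $\mathcal S$ cross at the same point, and every pair of orthogonal lines crossing at this point generates $\mathcal S$.
   Context: For distinct lines $L_1,L_2$ in the plane, the subset of $\mathbb{R}^3$ generated by them is the set of all points $(x,y,\pm z)$ such that $2z$ is the length of a line segment with one endpoint on $L_1$, the other on $L_2$, and midpoint $(x,y)$; $L_1,L_2$ are then called a pair of generating lines for this set. For a symmetric positive definite $2\times 2$ matrix $A$ and ${\bf a}\in\mathbb{R}^2$, the elliptical cone $(A,{\bf a})$ is $\{(x,y,z)\in\mathbb{R}^3: z^2=({\bf x}-{\bf a})^TA({\bf x}-{\bf a}),\ {\bf x}=(x,y)^T\}$, with cone matrix $A$ (uniquely determined by the set). It is an HR-cone if $\det A=1$, and a unit cone if $A=I$, the $2\times2$ identity matrix. *)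

(* Defs.v *)
From HB Require Import structures.
From mathcomp Require Import all_boot all_order all_algebra.
From mathcomp Require Import all_classical all_reals.
Set Implicit Arguments. Unset Strict Implicit. Unset Printing Implicit Defensive.
Import Order.TTheory GRing.Theory Num.Theory.
Local Open Scope ring_scope.
Local Open Scope classical_set_scope.

(* Points of the plane are row vectors 'rV[R]_2; points of R^3 are triples
   ((x, y), z) : R * R * R. *)
Section Defs.
Variable R : realType.

Definition pt (x y : R) : 'rV[R]_2 := \row_(i < 2) (if i == 0 then x else y).

Definition dot (u v : 'rV[R]_2) : R := (u *m v^T) 0 0.

Definition quad (A : 'M[R]_2) (v : 'rV[R]_2) : R := (v *m A *m v^T) 0 0.

Definition line_through (p d : 'rV[R]_2) : set 'rV[R]_2 :=
  [set p + t *: d | t in [set: R]].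

Definition is_line (L : set 'rV[R]_2) : Prop :=
  exists p d : 'rV[R]_2, d != 0 /\ L = line_through p d.

Definition orthogonal_lines (L1 L2 : set 'rV[R]_2) : Prop :=
  exists p1 d1 p2 d2 : 'rV[R]_2, d1 != 0 /\ d2 != 0 /\
    L1 = line_through p1 d1 /\ L2 = line_through p2 d2 /\ dot d1 d2 = 0.

Definition generated (L1 L2 : set 'rV[R]_2) : set (R * R * R) :=
  [set w | exists P Q : 'rV[R]_2, L1 P /\ L2 Q /\
     (2%:R)^-1 *: (P + Q) = pt w.1.1 w.1.2 /\
     (w.2 = (Num.sqrt (dot (P - Q) (P - Q))) / 2%:R \/
      w.2 = - ((Num.sqrt (dot (P - Q) (P - Q))) / 2%:R))].

Definition generating_pair (S : set (R * R * R)) (L1 L2 : set 'rV[R]_2) : Prop :=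
  is_line L1 /\ is_line L2 /\ L1 <> L2 /\ generated L1 L2 = S.

Definition sym_posdef (A : 'M[R]_2) : Prop :=
  A^T = A /\ forall v : 'rV[R]_2, v != 0 -> 0 < quad A v.

Definition elliptical_cone (A : 'M[R]_2) (a : 'rV[R]_2) : set (R * R * R) :=
  [set w | w.2 ^+ 2 = quad A (pt w.1.1 w.1.2 - a)].

Definition is_HR_cone (S : set (R * R * R)) : Prop :=
  exists (A : 'M[R]_2) (a : 'rV[R]_2),
    sym_posdef A /\ \det A = 1 /\ S = elliptical_cone A a.

Definition is_unit_cone (S : set (R * R * R)) : Prop :=
  exists a : 'rV[R]_2, S = elliptical_cone 1%:M a.

End Defs.

(* Main.v *)
Require Import Defs.
From HB Require Import structures.
From mathcomp Require Import all_boot all_order all_algebra.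
From mathcomp Require Import all_classical all_reals.
From mathcomp Require Import ring lra.
Import Order.TTheory GRing.Theory Num.Theory.
Set Implicit Arguments. Unset Strict Implicit.
Local Open Scope ring_scope.
Local Open Scope classical_set_scope.

Section S.
Variable R : realType.
Implicit Types u v d p c : 'rV[R]_2.

Notation "v '_0'" := (v ord0 ord0) (at level 2, format "v '_0'").
Notation "v '_1'" := (v ord0 (@Ordinal 2 1 isT)) (at level 2, format "v '_1'").

Lemma ord2P (i : 'I_2) : i = ord0 \/ i = (@Ordinal 2 1 isT).
Proof.
case: i => [[|[|k]] Hi]; [left|right|by []]; by apply: val_inj.
Qed.

Lemma rv2P u v : u _0 = v _0 -> u _1 = v _1 -> u = v.
Proof.
move=> h0 h1; apply/rowP => j.
case: (ord2P j) => -> //.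
Qed.

Lemma addE0 u v : (u + v) _0 = u _0 + v _0. Proof. by rewrite mxE. Qed.
Lemma addE1 u v : (u + v) _1 = u _1 + v _1. Proof. by rewrite mxE. Qed.
Lemma oppE0 u : (- u) _0 = - u _0. Proof. by rewrite mxE. Qed.
Lemma oppE1 u : (- u) _1 = - u _1. Proof. by rewrite mxE. Qed.
Lemma sclE0 (t : R) u : (t *: u) _0 = t * u _0. Proof. by rewrite mxE. Qed.
Lemma sclE1 (t : R) u : (t *: u) _1 = t * u _1. Proof. by rewrite mxE. Qed.
Lemma zeroE0 : (0 : 'rV[R]_2) _0 = 0. Proof. by rewrite mxE. Qed.
Lemma zeroE1 : (0 : 'rV[R]_2) _1 = 0. Proof. by rewrite mxE. Qed.
Lemma ptE0 (x y : R) : (pt x y) _0 = x. Proof. by rewrite mxE. Qed.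
Lemma ptE1 (x y : R) : (pt x y) _1 = y. Proof. by rewrite mxE. Qed.

Lemma lift0E : lift ord0 (ord0 : 'I_1) = (@Ordinal 2 1 isT).
Proof. by apply: val_inj. Qed.

Lemma dotE u v : dot u v = u _0 * v _0 + u _1 * v _1.
Proof.
rewrite /dot mxE !big_ord_recl big_ord0 !mxE addr0.
by congr (_ * _ + _ * _); congr (_ _ _); apply: val_inj.
Qed.

Lemma quadE (A : 'M[R]_2) v : quad A v =
  v _0 * v _0 * A ord0 ord0 + v _0 * v _1 * (A ord0 (@Ordinal 2 1 isT) + A (@Ordinal 2 1 isT) ord0)
  + v _1 * v _1 * A (@Ordinal 2 1 isT) (@Ordinal 2 1 isT).
Proof.
rewrite /quad mxE !big_ord_recl big_ord0 !mxE !big_ord_recl !big_ord0 /= lift0E.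
have -> : (0 : 'I_1) = ord0 by apply: val_inj.
ring.
Qed.

Definition crd := (addE0, addE1, oppE0, oppE1, sclE0, sclE1, zeroE0, zeroE1, ptE0, ptE1).

Definition cross u v : R := u _0 * v _1 - u _1 * v _0.

Lemma nz2 d : d != 0 -> d _0 != 0 \/ d _1 != 0.
Proof.
move=> hd; case: (eqVneq (d _0) 0) => h0; last by left.
case: (eqVneq (d _1) 0) => h1; last by right.
by move: hd; rewrite (_ : d = 0) ?eqxx //; apply: rv2P; rewrite crd.
Qed.

Lemma nz2n d : d != 0 -> 0 < d _0 * d _0 + d _1 * d _1.
Proof.
move=> /nz2 [h|h].
  have : 0 < d _0 * d _0 by rewrite lt0r mulf_neq0 //= -expr2 sqr_ge0.
  have : 0 <= d _1 * d _1 by rewrite -expr2 sqr_ge0.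
  lra.
have : 0 < d _1 * d _1 by rewrite lt0r mulf_neq0 //= -expr2 sqr_ge0.
have : 0 <= d _0 * d _0 by rewrite -expr2 sqr_ge0.
lra.
Qed.

Lemma mx2P (A B : 'M[R]_2) :
  A ord0 ord0 = B ord0 ord0 -> A ord0 (@Ordinal 2 1 isT) = B ord0 (@Ordinal 2 1 isT) ->
  A (@Ordinal 2 1 isT) ord0 = B (@Ordinal 2 1 isT) ord0 ->
  A (@Ordinal 2 1 isT) (@Ordinal 2 1 isT) = B (@Ordinal 2 1 isT) (@Ordinal 2 1 isT) -> A = B.
Proof.
move=> h00 h01 h10 h11; apply/matrixP => i j.
by case: (ord2P i) => ->; case: (ord2P j) => ->.
Qed.

Lemma line_shift p d c : line_through p d c -> line_through p d = line_through c d.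
Proof.
case=> t0 _ <-; apply/seteqP; split => x [t _ <-].
  exists (t - t0) => //; apply: rv2P; rewrite !crd; ring.
exists (t + t0) => //; apply: rv2P; rewrite !crd; ring.
Qed.

Lemma line_has p d : line_through p d p.
Proof. by exists 0 => //; rewrite scale0r addr0. Qed.

Lemma exk d e : d != 0 -> cross d e = 0 -> exists k, e = k *: d.
Proof.
rewrite /cross => hd hc; case: (nz2 hd) => h.
  exists (e _0 / d _0); apply: rv2P; rewrite !crd.
    by field.
  apply: (mulfI h); rewrite (_ : d _0 * e _1 = d _1 * e _0); last by lra.
  by field.
exists (e _1 / d _1); apply: rv2P; rewrite !crd; last by field.
apply: (mulfI h); rewrite (_ : d _1 * e _0 = d _0 * e _1); last by lra.
by field.
Qed.

Lemma line_dir c d e : d != 0 -> e != 0 -> cross d e = 0 -> line_through c d = line_through c e.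
Proof.
move=> hd he hc; case: (exk hd hc) => k ek.
have hk : k != 0 by apply: contraNneq he => k0; rewrite ek k0 scale0r.
rewrite ek; apply/seteqP; split => x [t _ <-].
  by exists (t / k) => //; rewrite scalerA divfK.
by exists (t * k) => //; rewrite scalerA.
Qed.

Lemma in_line_cross c d y : line_through c d (c + y) -> cross d y = 0.
Proof.
case=> t _ h.
have h0 := congr1 (fun v => v _0) h; have h1 := congr1 (fun v => v _1) h.
rewrite /= !crd in h0 h1.
rewrite /cross (_ : y _0 = t * d _0); last by lra.
rewrite (_ : y _1 = t * d _1); last by lra.
ring.
Qed.

Lemma cross_in_line c d y : d != 0 -> cross d y = 0 -> line_through c d (c + y).
Proof. by move=> hd /(exk hd) [k ->]; exists k. Qed.

Lemma intersect p1 d1 p2 d2 : cross d1 d2 != 0 ->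
  exists c, line_through p1 d1 c /\ line_through p2 d2 c.
Proof.
move=> hD; set w := p2 - p1.
exists (p1 + (cross w d2 / cross d1 d2) *: d1); split; first by exists (cross w d2 / cross d1 d2).
exists (cross w d1 / cross d1 d2) => //.
move: hD; rewrite /w /cross => hD; apply: rv2P; rewrite !crd; field => //.
Qed.

Definition kk d1 d2 : R := 4 * dot d1 d2 / cross d1 d2 ^+ 2.
Definition ee d1 d2 : R := d1 _0 * d2 _1 + d2 _0 * d1 _1.
Definition Amat d1 d2 : 'M[R]_2 := \matrix_(i < 2, j < 2)
  if (val i == 0%N) then (if val j == 0%N then 1 + kk d1 d2 * (d1 _1 * d2 _1)
                          else - (kk d1 d2 * ee d1 d2) / 2)
  else (if val j == 0%N then - (kk d1 d2 * ee d1 d2) / 2 else 1 + kk d1 d2 * (d1 _0 * d2 _0)).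

Lemma AmatT d1 d2 : (Amat d1 d2)^T = Amat d1 d2.
Proof. by apply: mx2P; rewrite !mxE. Qed.

Lemma quadAm d1 d2 v : quad (Amat d1 d2 - 1%:M) v = kk d1 d2 * cross d1 v * cross d2 v.
Proof. rewrite quadE !mxE /= /cross /ee. by field. Qed.

Lemma quadA d1 d2 v : quad (Amat d1 d2) v = dot v v + kk d1 d2 * cross d1 v * cross d2 v.
Proof. rewrite quadE dotE !mxE /= /cross /ee. by field. Qed.

Lemma quad1 v : quad 1%:M v = dot v v.
Proof. rewrite quadE dotE !mxE /=. ring. Qed.

Lemma Amat1 d1 d2 : dot d1 d2 = 0 -> Amat d1 d2 = 1%:M.
Proof.
move=> g0; have k0 : kk d1 d2 = 0 by rewrite /kk g0 mulr0 mul0r.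
by apply: mx2P; rewrite !mxE /= k0; ring.
Qed.

Lemma Amat1' d1 d2 : cross d1 d2 != 0 -> Amat d1 d2 = 1%:M -> dot d1 d2 = 0.
Proof.
move=> hD h.
have h00 := congr1 (fun A : 'M[R]_2 => A ord0 ord0) h.
have h11 := congr1 (fun A : 'M[R]_2 => A (@Ordinal 2 1 isT) (@Ordinal 2 1 isT)) h.
rewrite /= !mxE /= in h00 h11.
have : kk d1 d2 * dot d1 d2 = 0.
  rewrite dotE; lra.
rewrite /kk => e.
have : (2 * dot d1 d2 / cross d1 d2) ^+ 2 = 0.
  rewrite -[RHS]e; field; exact: hD.
by move/eqP; rewrite sqrf_eq0 !mulf_eq0 invr_eq0 (negbTE hD) pnatr_eq0 orbF /= => /eqP.
Qed.

Lemma dot_ge0 v : 0 <= dot v v.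
Proof. rewrite dotE; have := sqr_ge0 (v _0); have := sqr_ge0 (v _1); rewrite !expr2; lra. Qed.

Lemma ortho_cross d1 d2 : d1 != 0 -> d2 != 0 -> dot d1 d2 = 0 -> cross d1 d2 != 0.
Proof.
move=> h1 h2 g0; apply/eqP => c0.
have := nz2n h1; have := nz2n h2 => p2 p1.
have : (d1 _0 * d1 _0 + d1 _1 * d1 _1) * (d2 _0 * d2 _0 + d2 _1 * d2 _1) = 0.
  rewrite -[RHS](_ : dot d1 d2 ^+ 2 + cross d1 d2 ^+ 2 = 0); last by rewrite g0 c0; ring.
  rewrite dotE /cross; ring.
by move/eqP; rewrite mulf_eq0 => /orP [] /eqP; lra.
Qed.

Lemma posdef1 : sym_posdef (1%:M : 'M[R]_2).
Proof.
split; first exact: tr_scalar_mx.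
move=> v /nz2n; rewrite quad1 dotE //.
Qed.

Lemma quad0 (A : 'M[R]_2) : quad A 0 = 0.
Proof. rewrite quadE !crd; ring. Qed.

Lemma quad_ge0 (A : 'M[R]_2) v : sym_posdef A -> 0 <= quad A v.
Proof.
move=> [_ hp]; case: (eqVneq v 0) => [->|hv]; first by rewrite quad0.
exact/ltW/hp.
Qed.

Lemma ptK v : pt (v _0) (v _1) = v.
Proof. by apply: rv2P; rewrite crd. Qed.

Lemma KL c d1 d2 : cross d1 d2 != 0 ->
  generated (line_through c d1) (line_through c d2) = elliptical_cone (Amat d1 d2) c.
Proof.
move=> hD; apply/seteqP; split => -[[x y] z] /=.
- case=> P [Q [[t _ <-] [[s _ <-] [hm hz]]]]; rewrite /elliptical_cone /=.
  have hz2 : z ^+ 2 = dot (c + t *: d1 - (c + s *: d2)) (c + t *: d1 - (c + s *: d2)) / 2 ^+ 2.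
    by case: hz => /= ->; rewrite ?sqrrN expr_div_n sqr_sqrtr // dot_ge0.
  rewrite -hm quadA hz2 /kk !dotE /cross !crd.
  move: hD; rewrite /cross => hD.
  by field.
- rewrite /elliptical_cone /= => hq.
  set yv := pt x y - c.
  exists (c + (2 * cross yv d2 / cross d1 d2) *: d1), (c + (2 * cross d1 yv / cross d1 d2) *: d2).
  split; first by exists (2 * cross yv d2 / cross d1 d2).
  split; first by exists (2 * cross d1 yv / cross d1 d2).
  split.
    move: hD; rewrite /yv /cross => hD.
    by apply: rv2P; rewrite /= !crd; field.
  rewrite /=; set P := c + _ *: d1; set Q := c + _ *: d2.
  have : z ^+ 2 = (Num.sqrt (dot (P - Q) (P - Q)) / 2) ^+ 2.
    rewrite expr_div_n sqr_sqrtr ?dot_ge0 // hq quadA /P /Q /yv /kk !dotE.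
    move: hD; rewrite /cross => hD.
    rewrite !crd; by field.
  move/eqP; rewrite eqf_sqr => /orP [/eqP->|/eqP->]; [left|right] => //.
Qed.

Lemma uniq_cone (A B : 'M[R]_2) a b : sym_posdef A -> B^T = B ->
  elliptical_cone A a = elliptical_cone B b -> A = B /\ a = b.
Proof.
move=> hA hB he.
have hx : forall x, quad A (x - a) = quad B (x - b).
  move=> x; have : elliptical_cone A a ((x _0, x _1), Num.sqrt (quad A (x - a))).
    by rewrite /elliptical_cone /= ptK sqr_sqrtr // quad_ge0.
  by rewrite he /elliptical_cone /= ptK sqr_sqrtr // quad_ge0.
have hv : forall v, quad A v = quad B v.
  move=> v; have h1 := hx (a + v); have h2 := hx (a - v); have h3 := hx a.
  rewrite (_ : a + v - a = v) in h1; last by rewrite addrC addKr.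
  rewrite (_ : a - v - a = - v) in h2; last by rewrite addrC addKr.
  rewrite subrr quad0 in h3.
  have E : quad B (a + v - b) + quad B (a - v - b) - 2 * quad B (a - b) = 2 * quad B v.
    rewrite !quadE !crd; ring.
  have E2 : quad A (- v) = quad A v by rewrite !quadE !crd; ring.
  lra.
have hA01 := congr1 (fun M : 'M[R]_2 => M ord0 (@Ordinal 2 1 isT)) hA.1.
have hB01 := congr1 (fun M : 'M[R]_2 => M ord0 (@Ordinal 2 1 isT)) hB.
rewrite /= !mxE in hA01 hB01.
have q10 := hv (pt 1 0); have q01 := hv (pt 0 1); have q11 := hv (pt 1 1).
rewrite !quadE !crd in q10 q01 q11.
have AB : A = B.
  apply: mx2P; lra.
split => //.
have := hx a; rewrite subrr quad0 -AB => /esym h.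
apply/eqP; rewrite -subr_eq0; apply/negPn/negP => hne.
by have := hA.2 _ hne; rewrite h ltxx.
Qed.

Lemma nonpar p1 d1 p2 d2 (A : 'M[R]_2) a : d1 != 0 -> sym_posdef A ->
  generated (line_through p1 d1) (line_through p2 d2) = elliptical_cone A a -> cross d1 d2 != 0.
Proof.
move=> h1 hA he; apply/eqP => c0.
set x := 2^-1 *: (p1 + p2) + pt (- d1 _1) (d1 _0).
have : elliptical_cone A a ((x _0, x _1), Num.sqrt (quad A (x - a))).
  by rewrite /elliptical_cone /= ptK sqr_sqrtr // quad_ge0.
rewrite -he => -[P [Q [[t _ <-] [[s _ <-] [hm _]]]]].
have e0 := congr1 (fun v => v _0) hm; have e1 := congr1 (fun v => v _1) hm.
rewrite /x /= !crd in e0 e1.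
have := nz2n h1; move: c0; rewrite /cross => c0.
have E0 : t * d1 _0 + s * d2 _0 = - 2 * d1 _1 by lra.
have E1 : t * d1 _1 + s * d2 _1 = 2 * d1 _0 by lra.
have : s * (d1 _0 * d2 _1 - d1 _1 * d2 _0) = 2 * (d1 _0 * d1 _0 + d1 _1 * d1 _1).
  have -> : 2 * (d1 _0 * d1 _0 + d1 _1 * d1 _1) = d1 _0 * (2 * d1 _0) - d1 _1 * (- 2 * d1 _1) by ring.
  rewrite -E0 -E1; ring.
rewrite c0 mulr0; lra.
Qed.

Lemma ANA L1 L2 (A : 'M[R]_2) a : is_line L1 -> is_line L2 -> sym_posdef A ->
  generated L1 L2 = elliptical_cone A a ->
  exists d1 d2, d1 != 0 /\ d2 != 0 /\ cross d1 d2 != 0 /\ L1 = line_through a d1 /\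
                 L2 = line_through a d2 /\ A = Amat d1 d2.
Proof.
move=> [p1 [d1 [h1 ->]]] [p2 [d2 [h2 ->]]] hA he.
have hD := nonpar h1 hA he.
have [c [c1 c2]] := @intersect p1 d1 p2 d2 hD.
rewrite (line_shift c1) (line_shift c2) in he *.
rewrite (KL c hD) in he.
have [-> ->] := uniq_cone hA (AmatT d1 d2) (esym he).
by exists d1, d2.
Qed.

End S.

Theorem theorem3p6 (R : realType) (L1 L2 : set 'rV[R]_2) :
  is_line L1 -> is_line L2 -> L1 <> L2 ->
  (* (1) *)
  ((is_HR_cone (generated L1 L2) /\ ~ is_unit_cone (generated L1 L2)) ->
     (forall L1' L2' L1'' L2'' : set 'rV[R]_2,
        generating_pair (generated L1 L2) L1' L2' ->
        generating_pair (generated L1 L2) L1'' L2'' ->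
        (L1'' = L1' /\ L2'' = L2') \/ (L1'' = L2' /\ L2'' = L1')) /\
     (forall (A : 'M[R]_2) (a : 'rV[R]_2),
        sym_posdef A -> generated L1 L2 = elliptical_cone A a ->
        forall L1' L2' : set 'rV[R]_2,
          generating_pair (generated L1 L2) L1' L2' ->
          L1' `|` L2' = [set x | quad (A - 1%:M) (x - a) = 0])) /\
  (* (2) *)
  ((is_unit_cone (generated L1 L2) <-> orthogonal_lines L1 L2) /\
   (orthogonal_lines L1 L2 <->
      exists (A : 'M[R]_2) (a : 'rV[R]_2),
        sym_posdef A /\ generated L1 L2 = elliptical_cone A a /\ A = 1%:M)) /\
  (is_unit_cone (generated L1 L2) ->
     exists c : 'rV[R]_2,
       (forall L1' L2' : set 'rV[R]_2,
          generating_pair (generated L1 L2) L1' L2' -> L1' c /\ L2' c) /\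
       (forall L1' L2' : set 'rV[R]_2,
          is_line L1' -> is_line L2' -> orthogonal_lines L1' L2' ->
          L1' c -> L2' c -> generated L1' L2' = generated L1 L2)).
Proof.
move=> hl1 hl2 hne.
have unit_orth : is_unit_cone (generated L1 L2) <-> orthogonal_lines L1 L2.
  split.
  - case=> a ha.
    have [d1 [d2 [h1 [h2 [hD [E1 [E2 hA]]]]]]] := ANA hl1 hl2 (@posdef1 R) ha.
    exists a, d1, a, d2; do 4 (split => //); exact: Amat1' hD (esym hA).
  - case=> p1 [d1 [p2 [d2 [h1 [h2 [E1 [E2 g0]]]]]]].
    have hD := ortho_cross h1 h2 g0.
    have [c [c1 c2]] := @intersect R p1 d1 p2 d2 hD.
    by exists c; rewrite E1 E2 (line_shift c1) (line_shift c2) (KL c hD) Amat1.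
split.
  case=> -[A0 [a0 [pd0 [_ hS]]]] nu.
  have gnz : forall d1 d2 (A : 'M[R]_2) a, generated L1 L2 = elliptical_cone A a ->
      A = Amat d1 d2 -> dot d1 d2 != 0.
    move=> d1 d2 A a hSA hA; apply/eqP => g0; apply: nu; exists a.
    by rewrite hSA hA Amat1.
  have kz : forall d1 d2 : 'rV[R]_2, cross d1 d2 != 0 -> dot d1 d2 != 0 -> kk d1 d2 != 0.
    by move=> d1 d2 hD hg; rewrite /kk !mulf_neq0 ?invr_eq0 ?expf_neq0 ?pnatr_eq0.
  split.
  - move=> L1' L2' L1'' L2'' [hl1' [hl2' [hne' hg']]] [hl1'' [hl2'' [hne'' hg'']]].
    rewrite hS in hg' hg''.
    have [d1 [d2 [h1 [h2 [hD [E1 [E2 hA]]]]]]] := ANA hl1' hl2' pd0 hg'.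
    have [e1 [e2 [f1 [f2 [hDe [F1 [F2 hAe]]]]]]] := ANA hl1'' hl2'' pd0 hg''.
    have hk := kz _ _ hD (gnz _ _ _ _ hS hA).
    have key : forall e, e != 0 -> quad (A0 - 1%:M) e = 0 ->
        line_through a0 e = line_through a0 d1 \/ line_through a0 e = line_through a0 d2.
      move=> e he; rewrite hA quadAm => /eqP; rewrite -mulrA mulf_eq0 (negbTE hk) /= mulf_eq0.
      by case/orP => /eqP hc; [left|right]; apply/esym/line_dir.
    have q1 : quad (A0 - 1%:M) e1 = 0 by rewrite hAe quadAm /cross; ring.
    have q2 : quad (A0 - 1%:M) e2 = 0 by rewrite hAe quadAm /cross; ring.
    rewrite F1 F2 in hne'' *; rewrite E1 E2.
    case: (key e1 f1 q1) => r1; case: (key e2 f2 q2) => r2; rewrite r1 r2 in hne'' *.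
    + by exfalso; apply: hne''.
    + by left.
    + by right.
    + by exfalso; apply: hne''.
  - move=> A a pdA hSA L1' L2' [hl1' [hl2' [_ hg']]].
    rewrite hSA in hg'.
    have [d1 [d2 [h1 [h2 [hD [E1 [E2 hA]]]]]]] := ANA hl1' hl2' pdA hg'.
    have hk := kz _ _ hD (gnz _ _ _ _ hSA hA).
    rewrite E1 E2 hA; apply/seteqP; split => x.
    + rewrite /= quadAm => -[hx|hx].
      * have -> : cross d1 (x - a) = 0.
          by apply: (@in_line_cross R a); rewrite addrC subrK.
        by rewrite mulr0 mul0r.
      * have -> : cross d2 (x - a) = 0.
          by apply: (@in_line_cross R a); rewrite addrC subrK.
        by rewrite mulr0.
    + rewrite /= quadAm => /eqP; rewrite -mulrA mulf_eq0 (negbTE hk) /= mulf_eq0.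
      case/orP => /eqP hc; [left|right].
      * by have := @cross_in_line R a _ _ h1 hc; rewrite addrC subrK.
      * by have := @cross_in_line R a _ _ h2 hc; rewrite addrC subrK.
split.
  split; first exact: unit_orth.
  split.
  - by move=> /unit_orth [a ha]; exists 1%:M, a; split; [exact: posdef1 | split].
  - by case=> A [a [_ [ha eA]]]; rewrite eA in ha; apply/unit_orth; exists a.
case=> a ha; exists a; split.
- move=> L1' L2' [hl1' [hl2' [_ hg']]]; rewrite ha in hg'.
  have [d1 [d2 [_ [_ [_ [-> [-> _]]]]]]] := ANA hl1' hl2' (@posdef1 R) hg'.
  by split; exact: line_has.
- move=> L1' L2' _ _ [p1 [d1 [p2 [d2 [h1 [h2 [E1 [E2 g0]]]]]]]] c1 c2.
  have hD := ortho_cross h1 h2 g0.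
  rewrite E1 in c1; rewrite E2 in c2.
  by rewrite E1 E2 (line_shift c1) (line_shift c2) (KL a hD) Amat1 // ha.
Qed.
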